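(* Let $\mathbf{V}\in\mathbb{R}^{N\times N}$ and $\mathbf{A}\in\mathbb{R}^{T\times N}$ satisfy $\mathbf{1}_N^\top\mathbf{V}=\mathbf{1}_N^\top$, $\mathbf{1}_T^\top\mathbf{A}=\mathbf{1}_N^\top$, $\mathbf{V}\boldsymbol\mu=\boldsymbol\mu$. Then $$\mathbb{E}\hat\nabla_{\mathbf{A}}l=K_P\alpha_V(\alpha_V\alpha_A-1)\Big(\mathbf{Q}-\frac{\mathbf{1}_T\mathbf{1}_N^\top}{T}\Big)+K_P\alpha_V^2\boldsymbol\Delta_A+\|\boldsymbol\Delta_V\|_\mu^2\Big(\mathbf{A}-\frac{\mathbf{1}_T\mathbf{1}_N^\top}{T}\Big),$$ $$\mathbb{E}\hat\nabla_{\mathbf{V}}l=\alpha_AK_Q(\alpha_A\alpha_V-1)(\mathbf{P}-\boldsymbol\mu\mathbf{1}^\top)+\frac{\alpha_V-1}{T}(\mathbf{P}-\boldsymbol\mu\mathbf{1}^\top)+\Big(\alpha_A^2K_Q+\frac1T\Big)\boldsymbol\Delta_V+\|\boldsymbol\Delta_A\|_\mu^2(\mathbf{V}-\boldsymbol\mu\mathbf{1}^\top).$$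
   Context: $\boldsymbol\mu\in\mathbb{R}^N$ is a probability vector with positive entries; $\mathbf{P}\in\mathbb{R}^{N\times N}$ has nonnegative entries, columns summing to $1$, $\mathbf{P}\boldsymbol\mu=\boldsymbol\mu$; $\mathbf{Q}=(\mathbf{q}^{(1)},\dots,\mathbf{q}^{(N)})\in\mathbb{R}^{T\times N}$ has probability-vector columns. Data: $x_1,\dots,x_{T+1}$ i.i.d. with law $\boldsymbol\mu$, $x_o$ with $\Pr(x_o=n\mid x_{T+1}=k,x_1,\dots,x_T)=\sum_tq^{(k)}_tP_{n,x_t}$; $\mathbf{X}=(\mathbf{e}_{x_1},\dots,\mathbf{e}_{x_T})$; loss $l=\frac12\|\mathbf{e}_{x_o}-\mathbf{V}\mathbf{X}\mathbf{A}\mathbf{e}_{x_{T+1}}\|^2$; $\mathbf{a}^{(k)}$ the columns of $\mathbf{A}$. Preconditioned gradients: $\hat\nabla_{\mathbf{V}}l=(\mathbf{I}_N-\mathbf{1}\mathbf{1}^\top/N)(\nabla_{\mathbf{V}}l)\operatorname{diag}(1/\boldsymbol\mu)(\mathbf{I}_N-\boldsymbol\mu\boldsymbol\mu^\top/\|\boldsymbol\mu\|^2)$; $\hat\nabla_{\mathbf{A}}l$ is the $T\times N$ matrix with columns $\frac1{\mu_k}(\mathbf{I}_T-\mathbf{1}\mathbf{1}^\top/T)\nabla_{\mathbf{a}^{(k)}}l$. $\mathbb{E}$ is expectation over data with parameters fixed. $\langle\mathbf{M},\mathbf{M}'\rangle_\mu=\operatorname{Tr}(\mathbf{M}\operatorname{diag}(\boldsymbol\mu)\mathbf{M}'^\top)$,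 $\|\mathbf{M}\|_\mu^2=\langle\mathbf{M},\mathbf{M}\rangle_\mu$. $K_P=\|\mathbf{P}\|_\mu^2-\|\boldsymbol\mu\|^2>0$, $K_Q=\|\mathbf{Q}\|_\mu^2-1/T>0$, $\alpha_V=(\langle\mathbf{V},\mathbf{P}\rangle_\mu-\|\boldsymbol\mu\|^2)/K_P$, $\alpha_A=(\langle\mathbf{A},\mathbf{Q}\rangle_\mu-1/T)/K_Q$, $\boldsymbol\Delta_V=\mathbf{V}-\alpha_V\mathbf{P}-(1-\alpha_V)\boldsymbol\mu\mathbf{1}^\top$, $\boldsymbol\Delta_A=\mathbf{A}-\alpha_A\mathbf{Q}-(1-\alpha_A)\mathbf{1}\mathbf{1}^\top/T$. *)

(* Defs.v *)
From HB Require Import structures.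
From mathcomp Require Import all_boot all_order all_algebra.
From mathcomp Require Import all_classical all_reals.
From mathcomp Require Import topology normedtype derive.
Set Implicit Arguments. Unset Strict Implicit. Unset Printing Implicit Defensive.
Import Order.TTheory GRing.Theory Num.Theory numFieldNormedType.Exports.
Local Open Scope ring_scope.

Section Defs.
Variables (R : realType) (N T : nat).

Definition col_stochastic m (M : 'M[R]_(m, N)) : Prop :=
  (forall i j, 0 <= M i j) /\ (forall j, \sum_i M i j = 1).


Definition mu_inner m (mu : 'cV[R]_N) (M M' : 'M[R]_(m, N)) : R :=
  \tr (M *m diag_mx mu^T *m M'^T).
Definition mu_norm2 m (mu : 'cV[R]_N) (M : 'M[R]_(m, N)) : R := mu_inner mu M M.

Definition sqnorm (mu : 'cV[R]_N) : R := \sum_i mu i 0 ^+ 2.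

(* X = (e_{x_1}, ..., e_{x_T}) *)
Definition Xmat (x : 'I_T -> 'I_N) : 'M[R]_(N, T) := \matrix_(i, t) (i == x t)%:R.

(* loss l = 1/2 || e_{x_o} - V X A e_{x_{T+1}} ||^2, with k = x_{T+1}, o = x_o *)
Definition loss (V : 'M[R]_N) (A : 'M[R]_(T, N)) (x : 'I_T -> 'I_N) (k o : 'I_N) : R :=
  2^-1 * \sum_i ((i == o)%:R - (V *m Xmat x *m (A *m delta_mx k (0 : 'I_1))) i 0) ^+ 2.

Definition gradV V A x k o : 'M[R]_N :=
  \matrix_(i, j) derive1 (fun s : R => loss (V + s *: delta_mx i j) A x k o) 0.
Definition gradA V A x k o : 'M[R]_(T, N) :=
  \matrix_(i, j) derive1 (fun s : R => loss V (A + s *: delta_mx i j) x k o) 0.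

Definition hat_gradV (mu : 'cV[R]_N) V A x k o : 'M[R]_N :=
  (1%:M - const_mx (N%:R^-1)) *m gradV V A x k o
  *m diag_mx (\row_i (mu i 0)^-1)
  *m (1%:M - (sqnorm mu)^-1 *: (mu *m mu^T)).
Definition hat_gradA (mu : 'cV[R]_N) V A x k o : 'M[R]_(T, N) :=
  \matrix_(t, j) ((mu j 0)^-1 *
     (((1%:M - const_mx (T%:R^-1)) : 'M[R]_T) *m col j (gradA V A x k o)) t 0).

Definition data_prob (mu : 'cV[R]_N) (P : 'M[R]_N) (Q : 'M[R]_(T, N))
  (x : {ffun 'I_T -> 'I_N}) (k o : 'I_N) : R :=
  (\prod_t mu (x t) 0) * mu k 0 * (\sum_t Q t k * P o (x t)).

Definition Edata m n (mu : 'cV[R]_N) (P : 'M[R]_N) (Q : 'M[R]_(T, N))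
  (f : ('I_T -> 'I_N) -> 'I_N -> 'I_N -> 'M[R]_(m, n)) : 'M[R]_(m, n) :=
  \sum_(x : {ffun 'I_T -> 'I_N}) \sum_k \sum_o data_prob mu P Q x k o *: f x k o.

Definition K_P mu (P : 'M[R]_N) : R := mu_norm2 mu P - sqnorm mu.
Definition K_Q mu (Q : 'M[R]_(T, N)) : R := mu_norm2 mu Q - T%:R^-1.
Definition alpha_V mu P (V : 'M[R]_N) : R :=
  (mu_inner mu V P - sqnorm mu) / K_P mu P.
Definition alpha_A mu Q (A : 'M[R]_(T, N)) : R :=
  (mu_inner mu A Q - T%:R^-1) / K_Q mu Q.
Definition Delta_V mu P V : 'M[R]_N :=
  V - alpha_V mu P V *: P - (1 - alpha_V mu P V) *: (mu *m (const_mx 1 : 'rV[R]_N)).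
Definition Delta_A mu Q A : 'M[R]_(T, N) :=
  A - alpha_A mu Q A *: Q - (1 - alpha_A mu Q A) *: const_mx (T%:R^-1).

End Defs.

(* Main.v *)
Require Import Defs.
From HB Require Import structures.
From mathcomp Require Import all_boot all_order all_algebra.
From mathcomp Require Import all_classical all_reals.
From mathcomp Require Import topology normedtype derive.
From mathcomp Require Import ring lra.
Import Order.TTheory GRing.Theory Num.Theory numFieldNormedType.Exports.
Local Open Scope ring_scope.
Set Implicit Arguments. Unset Strict Implicit. Unset Printing Implicit Defensive.
Section S.
Variable R : realType.
Lemma quad_derive (a b c : R) (f : R -> R) :
  (forall s, f s = a + b * s + c * s ^+ 2) -> derive1 f 0 = b.
Proof.
move=> hf.
have -> : f = horner (a%:P + b *: 'X + c *: 'X^2).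
  by apply/funext => s; rewrite hf !hornerE.
rewrite derive1E (@derive_val _ _ _ _ _ _ _ (is_derive_poly _ _)).
by rewrite !(derivD, derivZ, derivC, derivX, derivXn) !hornerE /=; ring.
Qed.

Lemma loss_quad n (c e d : 'I_n -> R) :
  derive1 (fun s => 2^-1 * \sum_l (c l - (e l + s * d l)) ^+ 2) 0
  = - \sum_l (c l - e l) * d l.
Proof.
apply: (@quad_derive (2^-1 * \sum_l (c l - e l) ^+ 2) _ (2^-1 * \sum_l d l ^+ 2)) => s.
rewrite !mulr_sumr !mulr_suml -sumrN !mulr_suml -!big_split /=.
by apply: eq_bigr => l _; field.
Qed.
End S.
Section S1b.
Variable R : realType.
Lemma loss_quad' n (f : R -> R) (c e d : 'I_n -> R) :
  (forall s, f s = 2^-1 * \sum_l (c l - (e l + s * d l)) ^+ 2) ->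
  derive1 f 0 = - \sum_l (c l - e l) * d l.
Proof. by move=> hf; rewrite -(loss_quad c e d); congr derive1; apply/funext. Qed.
End S1b.
Section S2.
Variables (R : realType) (N T : nat).

Lemma sum_delta n (F : 'I_n -> R) i : \sum_l (l == i)%:R * F l = F i.
Proof.
rewrite (bigD1 i) //= eqxx mul1r big1 ?addr0 // => l.
by move=> /negbTE ->; rewrite mul0r.
Qed.

Lemma sum_deltar n (F : 'I_n -> R) i : \sum_l F l * (l == i)%:R = F i.
Proof. by rewrite -[RHS](sum_delta F i); apply: eq_bigr => l _; rewrite mulrC. Qed.

Lemma delta_mulE m n p (i : 'I_m) (j : 'I_n) (M : 'M[R]_(n, p)) l c :
  (delta_mx i j *m M) l c = (l == i)%:R * M j c.
Proof.
rewrite mxE; under eq_bigr => m0 _ do rewrite mxE.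
case: (eqVneq l i) => [_|nli] /=.
  by rewrite mul1r -[RHS](sum_delta (fun m0 => M m0 c) j); apply: eq_bigr => m0 _.
by rewrite mul0r big1 // => m0 _; rewrite mul0r.
Qed.

Lemma mx_addZE m n (M M' : 'M[R]_(m,n)) s l c :
  (M + s *: M') l c = M l c + s * M' l c.
Proof. by rewrite !mxE. Qed.

Definition zv (A : 'M[R]_(T, N)) (x : 'I_T -> 'I_N) (k : 'I_N) : 'cV[R]_N :=
  Xmat R x *m (A *m delta_mx k 0).

Lemma gradVE V A x k o i j :
  gradV V A x k o i j = ((V *m zv A x k) i 0 - (i == o)%:R) * zv A x k j 0.
Proof.
rewrite mxE (@loss_quad' _ _ _ (fun l => (l == o)%:R) (fun l => (V *m zv A x k) l 0)
   (fun l => (l == i)%:R * zv A x k j 0)).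
  rewrite -sumrN.
  under eq_bigr => l _ do rewrite mulrCA -mulrN.
  rewrite sum_delta; ring.
move=> s; rewrite /loss; congr (_ * _); apply: eq_bigr => l _.
rewrite -mulmxA mulmxDl -scalemxAl -/(zv A x k).
by rewrite mx_addZE delta_mulE.
Qed.

Lemma VXE (V : 'M[R]_N) (x : 'I_T -> 'I_N) l t : (V *m Xmat R x) l t = V l (x t).
Proof.
rewrite mxE -[RHS](sum_deltar (fun m => V l m) (x t)).
by apply: eq_bigr => m _; rewrite mxE.
Qed.

Lemma VXdE (V : 'M[R]_N) (x : 'I_T -> 'I_N) (t : 'I_T) (j k : 'I_N) l :
  (V *m Xmat R x *m (delta_mx t j *m delta_mx k (0 : 'I_1))) l 0 = (j == k)%:R * V l (x t).
Proof.
rewrite mul_delta_mx_cond.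
case: (eqVneq j k) => _ /=; last by rewrite mulr0n mulmx0 mxE mul0r.
by rewrite mulr1n -colE mxE VXE mul1r.
Qed.

Lemma gradAE V A x k o t j :
  gradA V A x k o t j = (j == k)%:R *
     \sum_l ((V *m zv A x k) l 0 - (l == o)%:R) * V l (x t).
Proof.
rewrite mxE (@loss_quad' _ _ _ (fun l => (l == o)%:R) (fun l => (V *m zv A x k) l 0)
   (fun l => (j == k)%:R * V l (x t))).
  rewrite -sumrN mulr_sumr.
  by apply: eq_bigr => l _; ring.
move=> s; rewrite /loss; congr (_ * _); apply: eq_bigr => l _.
by rewrite mulmxDl -scalemxAl mulmxDr -scalemxAr mx_addZE VXdE /zv !mulmxA.
Qed.
End S2.
Section S3.
Variables (R : realType) (N T : nat).
Variable mu : 'cV[R]_N.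
Hypothesis mu1 : \sum_i mu i 0 = 1.

Definition pi (x : {ffun 'I_T -> 'I_N}) : R := \prod_r mu (x r) 0.

Lemma prod_if1 (F : 'I_T -> R) t : \prod_r (if r == t then F r else 1) = F t.
Proof. by rewrite -big_mkcond big_pred1_eq. Qed.

Lemma E2 (t s : 'I_T) (f g : 'I_N -> R) :
  \sum_(x : {ffun 'I_T -> 'I_N}) pi x * (f (x t) * g (x s)) =
  if t == s then \sum_l mu l 0 * (f l * g l)
  else (\sum_l mu l 0 * f l) * (\sum_l mu l 0 * g l).
Proof.
pose F r l := mu l 0 * ((if r == t then f l else 1) * (if r == s then g l else 1)).
transitivity (\sum_(x : {ffun 'I_T -> 'I_N}) \prod_r F r (x r)).
  apply: eq_bigr => x _; rewrite /F big_split big_split /= /pi.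
  congr (_ * (_ * _)).
    by rewrite -(prod_if1 (fun r => f (x r)) t).
  by rewrite -(prod_if1 (fun r => g (x r)) s).
rewrite -bigA_distr_bigA /=.
case: (eqVneq t s) => [ets|nts]; first subst s.
  rewrite -(prod_if1 (fun _ => \sum_l mu l 0 * (f l * g l)) t).
  apply: eq_bigr => r _; rewrite /F.
  case: (eqVneq r t) => _ //=.
  by rewrite -[RHS]mu1; apply: eq_bigr => l _; rewrite !mulr1.
rewrite -(prod_if1 (fun _ => \sum_l mu l 0 * f l) t).
rewrite -(prod_if1 (fun _ => \sum_l mu l 0 * g l) s) -big_split /=.
apply: eq_bigr => r _; rewrite /F.
case: (eqVneq r t) => [ert|nrt]; case: (eqVneq r s) => [ers|nrs] //=.
- by move: nts; rewrite -ert -ers eqxx.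
- by rewrite mulr1; apply: eq_bigr => l _; rewrite mulr1.
- by rewrite mul1r; apply: eq_bigr => l _; rewrite mul1r.
- by rewrite mulr1 -[RHS]mu1; apply: eq_bigr => l _; rewrite !mulr1.
Qed.
End S3.
Section S4.
Variables (R : realType) (N T : nat).
Variables (mu : 'cV[R]_N) (P : 'M[R]_N) (Q : 'M[R]_(T, N)).
Hypothesis hP : forall j, \sum_i P i j = 1.
Hypothesis hQ : forall j, \sum_t Q t j = 1.

Lemma AdE m (A : 'M[R]_(m, N)) k t : (A *m delta_mx k (0 : 'I_1)) t 0 = A t k.
Proof. by rewrite -colE mxE. Qed.

Lemma zvE (A : 'M[R]_(T, N)) x k l : zv A x k l 0 = \sum_t (l == x t)%:R * A t k.
Proof.
rewrite /zv mxE; apply: eq_bigr => t _.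
by rewrite AdE mxE.
Qed.

Lemma VzvE (V : 'M[R]_N) (A : 'M[R]_(T, N)) x k l :
  (V *m zv A x k) l 0 = \sum_t A t k * V l (x t).
Proof.
rewrite /zv mulmxA mxE; apply: eq_bigr => t _.
by rewrite VXE AdE mulrC.
Qed.

Lemma o_sum (x : {ffun 'I_T -> 'I_N}) k (a b : R) (G : 'I_N -> R) :
  \sum_o data_prob mu P Q x k o * (a - b * G o) =
  pi mu x * mu k 0 * (a - b * \sum_u Q u k * \sum_o P o (x u) * G o).
Proof.
rewrite /data_prob.
set S := fun o => \sum_t Q t k * P o (x t).
have e1 : \sum_o S o * G o = \sum_u Q u k * \sum_o P o (x u) * G o.
  rewrite /S; under eq_bigr do rewrite mulr_suml.
  rewrite exchange_big; apply: eq_bigr => u _; rewrite mulr_sumr.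
  by apply: eq_bigr => o _; rewrite mulrA.
have e0 : \sum_o S o = 1.
  rewrite /S exchange_big /= -[RHS](hQ k); apply: eq_bigr => u _.
  by rewrite -mulr_sumr hP mulr1.
transitivity (\sum_o ((pi mu x * mu k 0 * a) * S o - (pi mu x * mu k 0 * b) * (S o * G o))).
  by apply: eq_bigr => o _; rewrite /pi /S; ring.
by rewrite sumrB -!mulr_sumr e0 e1; ring.
Qed.
End S4.
Section S5.
Variables (R : realType) (N T : nat).
Variables (mu : 'cV[R]_N) (P : 'M[R]_N) (Q : 'M[R]_(T, N)).
Variables (V : 'M[R]_N) (A : 'M[R]_(T, N)).
Hypothesis mu1 : \sum_i mu i 0 = 1.
Hypothesis hP : forall j, \sum_i P i j = 1.
Hypothesis hQ : forall j, \sum_t Q t j = 1.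
Hypothesis hA : forall j, \sum_t A t j = 1.
Hypothesis hPmu : forall i, \sum_l P i l * mu l 0 = mu i 0.
Hypothesis hVmu : forall i, \sum_l V i l * mu l 0 = mu i 0.

Lemma sum_if n (t : 'I_n) (X Y : 'I_n -> R) :
  \sum_s (if t == s then Y s else X s) = \sum_s X s + (Y t - X t).
Proof.
rewrite (bigD1 t) // [in RHS](bigD1 t) //= eqxx.
rewrite (eq_bigr X); first by ring.
by move=> s; rewrite eq_sym => /negbTE ->.
Qed.

Lemma Ex_sum2 (I J : finType) (F : I -> J -> {ffun 'I_T -> 'I_N} -> R) :
  \sum_(x : {ffun 'I_T -> 'I_N}) pi mu x * \sum_t \sum_s F t s x =
  \sum_t \sum_s \sum_(x : {ffun 'I_T -> 'I_N}) pi mu x * F t s x.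
Proof.
under eq_bigr do rewrite mulr_sumr.
rewrite exchange_big; apply: eq_bigr => t _.
under eq_bigr do rewrite mulr_sumr.
by rewrite exchange_big.
Qed.

Lemma LemV_k k i j :
  \sum_(x : {ffun 'I_T -> 'I_N}) pi mu x *
    (((V *m zv A x k) i 0 - \sum_u Q u k * P i (x u)) * zv A x k j 0) =
  mu j 0 * ((\sum_t A t k ^+ 2) * (V i j - mu i 0)
             - (\sum_t A t k * Q t k) * (P i j - mu i 0)).
Proof.
transitivity (\sum_(x : {ffun 'I_T -> 'I_N}) pi mu x * \sum_t \sum_s
   ((fun l => A t k * V i l - Q t k * P i l) (x t) *
    (fun l => (j == l)%:R * A s k) (x s))).
  apply: eq_bigr => x _; congr (_ * _).
  rewrite VzvE zvE -sumrB mulr_suml; apply: eq_bigr => t _.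
  by rewrite mulr_sumr; apply: eq_bigr => s _; rewrite /= mulrBl.
rewrite Ex_sum2.
under eq_bigr => t _ do under eq_bigr => s _ do
  rewrite (E2 mu1 t s (fun l => A t k * V i l - Q t k * P i l) (fun l => (j == l)%:R * A s k)).
have e_phi t : \sum_l mu l 0 * (A t k * V i l - Q t k * P i l) = (A t k - Q t k) * mu i 0.
  rewrite (eq_bigr (fun l => A t k * (V i l * mu l 0) - Q t k * (P i l * mu l 0))).
    by rewrite sumrB -!mulr_sumr hVmu hPmu; ring.
  by move=> l _; ring.
have e_both t s : \sum_l mu l 0 * ((A t k * V i l - Q t k * P i l) * ((j == l)%:R * A s k))
    = mu j 0 * ((A t k * V i j - Q t k * P i j) * A s k).
  rewrite -(sum_delta (fun l => mu l 0 * ((A t k * V i l - Q t k * P i l) * A s k)) j).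
  by apply: eq_bigr => l _; rewrite eq_sym; ring.
have e_psi s : \sum_l mu l 0 * ((j == l)%:R * A s k) = mu j 0 * A s k.
  rewrite -(sum_delta (fun l => mu l 0 * A s k) j).
  by apply: eq_bigr => l _; rewrite eq_sym; ring.
under eq_bigr => t _ do under eq_bigr => s _ do rewrite e_both e_phi e_psi.
under eq_bigr => t _ do rewrite sum_if.
have h0 : \sum_t (A t k - Q t k) = 0 by rewrite sumrB hA hQ subrr.
transitivity (\sum_t (mu i 0 * mu j 0 * (A t k - Q t k) +
   mu j 0 * (A t k ^+ 2 * (V i j - mu i 0) - A t k * Q t k * (P i j - mu i 0)))).
  apply: eq_bigr => t _.
  rewrite (eq_bigr (fun s => ((A t k - Q t k) * mu i 0 * mu j 0) * A s k)); last by move=> s _; ring.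
  rewrite -mulr_sumr hA; ring.
rewrite big_split /= -mulr_sumr h0 mulr0 add0r -mulr_sumr sumrB -!mulr_suml.
by [].
Qed.

Lemma sum_if_const n (b : bool) (X Y : 'I_n -> R) :
  \sum_l (if b then Y l else X l) = if b then \sum_l Y l else \sum_l X l.
Proof. by case: b. Qed.

Lemma LemA_k k t :
  \sum_(x : {ffun 'I_T -> 'I_N}) pi mu x *
    (\sum_l (V *m zv A x k) l 0 * V l (x t)
       - \sum_u Q u k * \sum_o P o (x u) * V o (x t)) =
  A t k * (\sum_l \sum_a mu a 0 * (V l a * V l a) - \sum_l mu l 0 ^+ 2)
  - Q t k * (\sum_l \sum_a mu a 0 * (V l a * P l a) - \sum_l mu l 0 ^+ 2).
Proof.
transitivity (\sum_(x : {ffun 'I_T -> 'I_N}) pi mu x * \sum_s \sum_l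
   ((fun a => V l a) (x t) *
    (fun b => A s k * V l b - Q s k * P l b) (x s))).
  apply: eq_bigr => x _; congr (_ * _).
  under eq_bigr do rewrite VzvE mulr_suml.
  rewrite exchange_big -sumrB; apply: eq_bigr => s _.
  rewrite mulr_sumr -sumrB; apply: eq_bigr => l _ /=; ring.
rewrite Ex_sum2.
under eq_bigr => s _ do under eq_bigr => l _ do
  rewrite (E2 mu1 t s (fun a => V l a) (fun b => A s k * V l b - Q s k * P l b)).
have e_phi s l : \sum_b mu b 0 * (A s k * V l b - Q s k * P l b) = (A s k - Q s k) * mu l 0.
  rewrite (eq_bigr (fun b => A s k * (V l b * mu b 0) - Q s k * (P l b * mu b 0))).
    by rewrite sumrB -!mulr_sumr hVmu hPmu; ring.
  by move=> b _; ring.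
have e_V l : \sum_a mu a 0 * V l a = mu l 0.
  by rewrite -[RHS]hVmu; apply: eq_bigr => a _; rewrite mulrC.
under eq_bigr => s _ do under eq_bigr => l _ do rewrite e_phi e_V.
under eq_bigr => s _ do rewrite sum_if_const.
rewrite sum_if.
have h0 : \sum_s \sum_l mu l 0 * ((A s k - Q s k) * mu l 0) = 0.
  rewrite (eq_bigr (fun s => (A s k - Q s k) * \sum_l mu l 0 ^+ 2)).
    by rewrite -mulr_suml sumrB hA hQ subrr mul0r.
  by move=> s _; rewrite mulr_sumr; apply: eq_bigr => l _; ring.
rewrite h0 add0r.
rewrite (eq_bigr (fun l => A t k * \sum_a mu a 0 * (V l a * V l a) - Q t k * \sum_a mu a 0 * (V l a * P l a))).
  rewrite sumrB -!mulr_sumr.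
  have -> : \sum_l mu l 0 * ((A t k - Q t k) * mu l 0) = (A t k - Q t k) * \sum_l mu l 0 ^+ 2.
    by rewrite mulr_sumr; apply: eq_bigr => l _; ring.
  ring.
move=> l _; rewrite !mulr_sumr -sumrB; apply: eq_bigr => a _; ring.
Qed.
End S5.
Section S6.
Variables (R : realType) (N T : nat).
Variables (mu : 'cV[R]_N) (P : 'M[R]_N) (Q : 'M[R]_(T, N)).
Variables (V : 'M[R]_N) (A : 'M[R]_(T, N)).
Hypothesis mu1 : \sum_i mu i 0 = 1.
Hypothesis hP : forall j, \sum_i P i j = 1.
Hypothesis hQ : forall j, \sum_t Q t j = 1.
Hypothesis hA : forall j, \sum_t A t j = 1.
Hypothesis hPmu : forall i, \sum_l P i l * mu l 0 = mu i 0.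
Hypothesis hVmu : forall i, \sum_l V i l * mu l 0 = mu i 0.

Lemma Edata_entry m n (f : ('I_T -> 'I_N) -> 'I_N -> 'I_N -> 'M[R]_(m, n)) i j :
  Edata mu P Q f i j =
  \sum_(x : {ffun 'I_T -> 'I_N}) \sum_k \sum_o data_prob mu P Q x k o * f x k o i j.
Proof.
rewrite /Edata summxE; apply: eq_bigr => x _; rewrite summxE; apply: eq_bigr => k _.
by rewrite summxE; apply: eq_bigr => o _; rewrite mxE.
Qed.

Definition cA := \sum_k mu k 0 * \sum_t A t k ^+ 2.
Definition cAQ := \sum_k mu k 0 * \sum_t A t k * Q t k.

Lemma gradV_form x k o i j :
  gradV V A x k o i j = (V *m zv A x k) i 0 * zv A x k j 0 - zv A x k j 0 * (i == o)%:R.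
Proof. rewrite gradVE; ring. Qed.

Lemma EgV_entry i j :
  Edata mu P Q (gradV V A) i j =
  mu j 0 * (cA * (V i j - mu i 0) - cAQ * (P i j - mu i 0)).
Proof.
rewrite Edata_entry.
under eq_bigr => x _ do under eq_bigr => k _ do
  (under eq_bigr => o _ do rewrite gradV_form; rewrite o_sum //).
rewrite exchange_big /=.
transitivity (\sum_k mu k 0 * \sum_(x : {ffun 'I_T -> 'I_N}) pi mu x *
    (((V *m zv A x k) i 0 - \sum_u Q u k * P i (x u)) * zv A x k j 0)).
  apply: eq_bigr => k _; rewrite mulr_sumr; apply: eq_bigr => x _.
  under eq_bigr => u _ do under eq_bigr => o _ do rewrite eq_sym.
  under eq_bigr => u _ do rewrite (sum_deltar (fun o => P o (x u))).
  by ring.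
under eq_bigr => k _ do rewrite LemV_k //.
rewrite /cA /cAQ !mulr_suml -sumrB mulr_sumr; apply: eq_bigr => k _; ring.
Qed.

Lemma gradA_form x k o t j :
  gradA V A x k o t j = (j == k)%:R * \sum_l (V *m zv A x k) l 0 * V l (x t)
     - (j == k)%:R * V o (x t).
Proof.
rewrite gradAE -mulrBr; congr (_ * _).
under eq_bigr do rewrite mulrBl.
by rewrite sumrB sum_delta.
Qed.

Definition cV := \sum_l \sum_a mu a 0 * (V l a * V l a) - \sum_l mu l 0 ^+ 2.
Definition cVP := \sum_l \sum_a mu a 0 * (V l a * P l a) - \sum_l mu l 0 ^+ 2.

Lemma EgA_entry t j :
  Edata mu P Q (gradA V A) t j = mu j 0 * (A t j * cV - Q t j * cVP).
Proof.
rewrite Edata_entry.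
under eq_bigr => x _ do under eq_bigr => k _ do
  (under eq_bigr => o _ do rewrite gradA_form; rewrite o_sum //).
rewrite exchange_big /=.
transitivity (\sum_k (j == k)%:R * (mu k 0 * \sum_(x : {ffun 'I_T -> 'I_N}) pi mu x *
    (\sum_l (V *m zv A x k) l 0 * V l (x t)
       - \sum_u Q u k * \sum_o P o (x u) * V o (x t)))).
  apply: eq_bigr => k _; rewrite !mulr_sumr; apply: eq_bigr => x _.
  by ring.
under eq_bigr => k _ do rewrite LemA_k // eq_sym.
by rewrite sum_delta.
Qed.
End S6.
Section S7.
Variables (R : realType) (N T : nat).
Variables (mu : 'cV[R]_N) (P : 'M[R]_N) (Q : 'M[R]_(T, N)).

Lemma Edata_mul m n p q (L : 'M[R]_(m, n)) (M : 'M[R]_(p, q))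
   (f : ('I_T -> 'I_N) -> 'I_N -> 'I_N -> 'M[R]_(n, p)) :
  Edata mu P Q (fun x k o => L *m f x k o *m M) = L *m Edata mu P Q f *m M.
Proof.
rewrite /Edata mulmx_sumr mulmx_suml; apply: eq_bigr => x _.
rewrite mulmx_sumr mulmx_suml; apply: eq_bigr => k _.
rewrite mulmx_sumr mulmx_suml; apply: eq_bigr => o _.
by rewrite -scalemxAr -scalemxAl.
Qed.

Lemma hat_gradV_E V (A : 'M[R]_(T, N)) :
  hat_gradV mu V A = (fun x k o =>
    (1%:M - const_mx (N%:R^-1)) *m gradV V A x k o *m
    (diag_mx (\row_i (mu i 0)^-1) *m (1%:M - (sqnorm mu)^-1 *: (mu *m mu^T)))).
Proof. by apply/funext => x; apply/funext => k; apply/funext => o; rewrite /hat_gradV mulmxA. Qed.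

Lemma hat_gradA_E V (A : 'M[R]_(T, N)) :
  hat_gradA mu V A = (fun x k o =>
    ((1%:M - const_mx (T%:R^-1)) : 'M[R]_T) *m gradA V A x k o *m diag_mx (\row_i (mu i 0)^-1)).
Proof.
apply/funext => x; apply/funext => k; apply/funext => o.
apply/matrixP => t j; rewrite mul_mx_diag [in RHS]mxE [(\row__ _) 0 j]mxE /hat_gradA mxE.
by rewrite colE mulmxA AdE mulrC.
Qed.
End S7.
Section S8.
Variables (R : realType) (N T : nat).
Variables (mu : 'cV[R]_N) (P : 'M[R]_N) (Q : 'M[R]_(T, N)).
Variables (V : 'M[R]_N) (A : 'M[R]_(T, N)).
Hypothesis mu1 : \sum_i mu i 0 = 1.
Hypothesis hP : forall j, \sum_i P i j = 1.
Hypothesis hQ : forall j, \sum_t Q t j = 1.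
Hypothesis hA : forall j, \sum_t A t j = 1.
Hypothesis hPmu : forall i, \sum_l P i l * mu l 0 = mu i 0.
Hypothesis hVmu : forall i, \sum_l V i l * mu l 0 = mu i 0.
Hypothesis hT : T%:R != 0 :> R.

Lemma muinnerE m (M M' : 'M[R]_(m, N)) :
  mu_inner mu M M' = \sum_i \sum_j M i j * mu j 0 * M' i j.
Proof.
rewrite /mu_inner /mxtrace; apply: eq_bigr => i _.
rewrite mxE; apply: eq_bigr => j _.
by rewrite mul_mx_diag !mxE.
Qed.

Lemma mu1E i j : (mu *m (const_mx 1 : 'rV[R]_N)) i j = mu i 0.
Proof. by rewrite mxE big_ord1 mxE mulr1. Qed.

Lemma DeltaV_entry i j :
  Delta_V mu P V i j = V i j - alpha_V mu P V * P i j - (1 - alpha_V mu P V) * mu i 0.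
Proof. by rewrite /Delta_V !mxE big_ord1 mxE mulr1. Qed.

Lemma DeltaA_entry t j :
  Delta_A mu Q A t j = A t j - alpha_A mu Q A * Q t j - (1 - alpha_A mu Q A) * T%:R^-1.
Proof. by rewrite /Delta_A !mxE. Qed.

Lemma normDV :
  mu_norm2 mu (Delta_V mu P V) =
  mu_norm2 mu V + alpha_V mu P V ^+ 2 * mu_norm2 mu P - 2 * alpha_V mu P V * mu_inner mu V P
  - sqnorm mu * (1 - alpha_V mu P V) ^+ 2.
Proof.
set a := alpha_V mu P V.
rewrite /mu_norm2 !muinnerE /sqnorm.
under eq_bigr => i _ do under eq_bigr => j _ do rewrite DeltaV_entry -/a.
transitivity (\sum_i \sum_j (V i j * mu j 0 * V i j + a ^+ 2 * (P i j * mu j 0 * P i j)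
   + (-2 * a) * (V i j * mu j 0 * P i j) + (1 - a) ^+ 2 * (mu i 0 ^+ 2 * mu j 0)
   + (-2 * (1 - a)) * (mu i 0 * (V i j * mu j 0)) + (2 * a * (1 - a)) * (mu i 0 * (P i j * mu j 0)))).
  by apply: eq_bigr => i _; apply: eq_bigr => j _; ring.
under eq_bigr => i _ do rewrite !big_split /= -!mulr_sumr hVmu hPmu mu1.
rewrite !big_split /= -!mulr_sumr.
have es : \sum_i mu i 0 * mu i 0 = \sum_i mu i 0 ^+ 2 by apply: eq_bigr => i _; rewrite expr2.
have es1 : \sum_i mu i 0 ^+ 2 * 1 = \sum_i mu i 0 ^+ 2 by apply: eq_bigr => i _; rewrite mulr1.
rewrite es es1; ring.
Qed.

Lemma sumA1 (M : 'M[R]_(T, N)) : (forall j, \sum_t M t j = 1) ->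
  \sum_t \sum_j M t j * mu j 0 = 1.
Proof.
move=> hM; rewrite exchange_big /= -mu1; apply: eq_bigr => j _.
by rewrite -mulr_suml hM mul1r.
Qed.

Lemma normDA :
  mu_norm2 mu (Delta_A mu Q A) =
  mu_norm2 mu A + alpha_A mu Q A ^+ 2 * mu_norm2 mu Q - 2 * alpha_A mu Q A * mu_inner mu A Q
  - T%:R^-1 * (1 - alpha_A mu Q A) ^+ 2.
Proof.
set a := alpha_A mu Q A.
set c := T%:R^-1.
rewrite /mu_norm2 !muinnerE.
under eq_bigr => i _ do under eq_bigr => j _ do rewrite DeltaA_entry -/a -/c.
transitivity (\sum_i \sum_j (A i j * mu j 0 * A i j + a ^+ 2 * (Q i j * mu j 0 * Q i j)
   + (-2 * a) * (A i j * mu j 0 * Q i j) + ((1 - a) ^+ 2 * c ^+ 2) * mu j 0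
   + (-2 * (1 - a) * c) * (A i j * mu j 0) + (2 * a * (1 - a) * c) * (Q i j * mu j 0))).
  by apply: eq_bigr => i _; apply: eq_bigr => j _; ring.
under eq_bigr => i _ do rewrite !big_split /= -!mulr_sumr mu1 mulr1.
rewrite !big_split /= -!mulr_sumr !sumA1 // sumr_const card_ord.
rewrite -[_ *+ T]mulr_natr.
by rewrite /c; field.
Qed.

Lemma cA_E : cA mu A = mu_norm2 mu A.
Proof.
rewrite /cA /mu_norm2 muinnerE exchange_big /=; apply: eq_bigr => k _.
by rewrite mulr_sumr; apply: eq_bigr => t _; ring.
Qed.

Lemma cAQ_E : cAQ mu Q A = mu_inner mu A Q.
Proof.
rewrite /cAQ muinnerE exchange_big /=; apply: eq_bigr => k _.
by rewrite mulr_sumr; apply: eq_bigr => t _; ring.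
Qed.

Lemma cV_E : cV mu V = mu_norm2 mu V - sqnorm mu.
Proof.
rewrite /cV /mu_norm2 muinnerE; congr (_ - _); apply: eq_bigr => l _.
by apply: eq_bigr => a _; ring.
Qed.

Lemma cVP_E : cVP mu P V = mu_inner mu V P - sqnorm mu.
Proof.
rewrite /cVP muinnerE; congr (_ - _); apply: eq_bigr => l _.
by apply: eq_bigr => a _; ring.
Qed.
End S8.
Lemma diag_inv (R : realType) N (mu : 'cV[R]_N) : (forall i, mu i 0 != 0) ->
  diag_mx mu^T *m diag_mx (\row_i (mu i 0)^-1) = 1%:M.
Proof.
move=> h; rewrite mulmx_diag; apply/matrixP => i j; rewrite !mxE.
by case: (eqVneq i j) => [->|_]; rewrite ?mulr1n ?mulr0n // mulfV.
Qed.

Theorem lemmaC4 (R : realType) (N T : nat)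
  (mu : 'cV[R]_N) (P : 'M[R]_N) (Q : 'M[R]_(T, N))
  (V : 'M[R]_N) (A : 'M[R]_(T, N)) :
  (forall i, 0 < mu i 0) -> \sum_i mu i 0 = 1 ->
  col_stochastic P -> P *m mu = mu ->
  col_stochastic Q ->
  0 < K_P mu P -> 0 < K_Q mu Q ->
  (const_mx 1 : 'rV[R]_N) *m V = (const_mx 1 : 'rV[R]_N) -> (const_mx 1 : 'rV[R]_T) *m A = (const_mx 1 : 'rV[R]_N) -> V *m mu = mu ->
  Edata mu P Q (hat_gradA mu V A) =
    (K_P mu P * alpha_V mu P V * (alpha_V mu P V * alpha_A mu Q A - 1))
      *: (Q - const_mx (T%:R^-1))
    + (K_P mu P * alpha_V mu P V ^+ 2) *: Delta_A mu Q A
    + mu_norm2 mu (Delta_V mu P V) *: (A - const_mx (T%:R^-1))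
  /\
  Edata mu P Q (hat_gradV mu V A) =
    (alpha_A mu Q A * K_Q mu Q * (alpha_A mu Q A * alpha_V mu P V - 1))
      *: (P - mu *m (const_mx 1 : 'rV[R]_N))
    + ((alpha_V mu P V - 1) / T%:R) *: (P - mu *m (const_mx 1 : 'rV[R]_N))
    + (alpha_A mu Q A ^+ 2 * K_Q mu Q + T%:R^-1) *: Delta_V mu P V
    + mu_norm2 mu (Delta_A mu Q A) *: (V - mu *m (const_mx 1 : 'rV[R]_N)).
Proof.
move=> hmu mu1 [hP0 hP] hPmu [hQ0 hQ] hKP hKQ hV1 hA1 hVmu.
have hA j : \sum_t A t j = 1.
  move/matrixP: hA1 => /(_ 0 j); rewrite !mxE => <-.
  by apply: eq_bigr => t _; rewrite mxE mul1r.
have hV j : \sum_i V i j = 1.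
  move/matrixP: hV1 => /(_ 0 j); rewrite !mxE => <-.
  by apply: eq_bigr => t _; rewrite mxE mul1r.
have hPmu' i : \sum_l P i l * mu l 0 = mu i 0.
  by move/matrixP: hPmu => /(_ i 0); rewrite mxE.
have hVmu' i : \sum_l V i l * mu l 0 = mu i 0.
  by move/matrixP: hVmu => /(_ i 0); rewrite mxE.
have hmu0 i : mu i 0 != 0 by rewrite gt_eqF.
have hKP0 : K_P mu P != 0 by rewrite gt_eqF.
have hKQ0 : K_Q mu Q != 0 by rewrite gt_eqF.
have hT : T%:R != 0 :> R.
  case: (pickP (fun _ : 'I_N => true)) => [j0 _|h]; last first.
    by move: mu1; rewrite big_pred0 // => /eqP; rewrite eq_sym oner_eq0.
  apply/negP => /eqP hT0.
  have hT0' : T = 0%N by apply/eqP; rewrite -(pnatr_eq0 R) hT0.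
  move: (hQ j0); rewrite big1 => [/eqP|t _]; first by rewrite eq_sym oner_eq0.
  by have := ltn_ord t; rewrite {2}hT0'.
have CY (c : R) n m (M : 'M[R]_(n, m)) t j : (const_mx c *m M) t j = c * \sum_s M s j.
  by rewrite mxE mulr_sumr; apply: eq_bigr => s _; rewrite mxE.
have subE m n (M M' : 'M[R]_(m, n)) t j : (M - M') t j = M t j - M' t j by rewrite !mxE.
split.
- rewrite hat_gradA_E Edata_mul.
  have EA : Edata mu P Q (gradA V A) = (cV mu V *: A - cVP mu P V *: Q) *m diag_mx mu^T.
    by apply/matrixP => t j; rewrite (EgA_entry mu1) // mul_mx_diag !mxE; ring.
  rewrite EA -!mulmxA diag_inv // mulmx1 mulmxBl mul1mx.
  apply/matrixP => t j.
  rewrite subE CY.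
  have eS : \sum_s (cV mu V *: A - cVP mu P V *: Q) s j = cV mu V - cVP mu P V.
    under eq_bigr do rewrite !mxE.
    by rewrite sumrB -!mulr_sumr hA hQ !mulr1.
  rewrite eS !mxE (normDV mu1) // cV_E cVP_E.
  rewrite /alpha_V.
  move: hKP0; rewrite /K_P => hKP0.
  field; by rewrite ?hKP0 ?hT.
- rewrite hat_gradV_E Edata_mul.
  set W := cA mu A *: (V - mu *m (const_mx 1 : 'rV[R]_N)) - cAQ mu Q A *: (P - mu *m (const_mx 1 : 'rV[R]_N)).
  have EV : Edata mu P Q (gradV V A) = W *m diag_mx mu^T.
    apply/matrixP => i j; rewrite (EgV_entry mu1) // mul_mx_diag !mxE !big_ord1 !mxE; ring.
  have hWmu : W *m mu = 0.
    apply/matrixP => i l; rewrite [l]ord1 mxE [RHS]mxE.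
    under eq_bigr do rewrite !mxE big_ord1 !mxE.
    rewrite (eq_bigr (fun k => cA mu A * (V i k * mu k 0 - mu i 0 * mu k 0)
               - cAQ mu Q A * (P i k * mu k 0 - mu i 0 * mu k 0))); last by move=> k _; ring.
    by rewrite sumrB -!mulr_sumr !sumrB -!mulr_sumr hVmu' hPmu' mu1; ring.
  have hW1 : forall j, \sum_l W l j = 0.
    move=> j; under eq_bigr do rewrite !mxE big_ord1 !mxE.
    rewrite (eq_bigr (fun k => cA mu A * (V k j - mu k 0)
               - cAQ mu Q A * (P k j - mu k 0))); last by move=> k _; ring.
    by rewrite sumrB -!mulr_sumr !sumrB hV hP mu1; ring.
  rewrite EV -mulmxA -mulmxA (mulmxA (diag_mx mu^T)) diag_inv // mul1mx.
  rewrite mulmxBr mulmx1 -scalemxAr mulmxA hWmu mul0mx scaler0 subr0.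
  rewrite mulmxBl mul1mx.
  apply/matrixP => i j.
  rewrite subE.
  have -> : (const_mx N%:R^-1 *m W) i j = 0.
    by rewrite CY hW1 mulr0.
  rewrite subr0 /W !mxE !big_ord1 !mxE (normDA mu1) // cA_E cAQ_E.
  rewrite /alpha_A.
  move: hKQ0; rewrite /K_Q => hKQ0.
  have hKQT : mu_norm2 mu Q * T%:R - 1 != 0.
    rewrite (_ : _ * T%:R - 1 = (mu_norm2 mu Q - T%:R^-1) * T%:R); first exact: mulf_neq0.
    by field.
  field; rewrite hT /=; exact: hKQT.
Qed.
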